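(* Let $M$ and $N$ be MV-algebras. (1) For every probability map $p\colon M\to N$, the dual map $p'\colon\operatorname{Max}N\to\operatorname{St}M$ is continuous. (2) If $N$ is semisimple, then the assignment $p\mapsto p'$ is a bijection from the set of probability maps $M\to N$ onto the set of their duals.
   Context: For an MV-algebra $(M,\oplus,\neg,0)$: $1\coloneqq\neg 0$, $a\odot b\coloneqq \neg(\neg a\oplus\neg b)$, $a\vee b\coloneqq\neg(\neg a\oplus b)\oplus b$, $a\wedge b\coloneqq\neg(\neg a\vee\neg b)$. A probability map is a function $p\colon M\to N$ between MV-algebras such that for all $a,b\in M$: (P1) $p(a\oplus b)=p(a)\oplus p(b\wedge\neg a)$; (P2) $p(\neg a)=\neg p(a)$; (P3) $p(1)=1$. A state of $M$ is a map $s\colon M\to[0,1]$ with $s(1)=1$ and $s(a\oplus b)=s(a)+s(b)$ whenever $a\odot b=0$; $\operatorname{St}M$ is the set of states with the topology of pointwise convergence (subspace of $[0,1]^M$). $\operatorname{Max}N$ is the compact Hausdorff space of maximal ideals of $N$; for $\mathfrak{n}\in\operatorname{Max}N$ let $h_{\mathfrak{n}}$ be the unique MV-isomorphism of $N/\mathfrak{n}$ onto a subalgebra of $[0,1]$ and $b^*(\mathfrak{n})\coloneqq h_{\mathfrak{n}}(b/\mathfrak{n})$ for $b\in N$ (so $b^*$ is continuous and $b\mapsto b^*$ is an MV-homomorphism). The dual of a probability map $p\colon M\to N$ is $p'\colon \operatorname{Max}N\to\operatorname{St}M$, $p'(\mathfrak{n})(a)\coloneqq p(a)^*(\mathfrak{n})$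 for $a\in M$. $N$ is semisimple if the intersection of its maximal ideals is $\{0\}$. *)

(* Defs.v *)
From Stdlib Require Import Reals ClassicalEpsilon.
Open Scope R_scope.

Record MVAlgebra := {
  mv_car :> Type;
  mv_add : mv_car -> mv_car -> mv_car;
  mv_neg : mv_car -> mv_car;
  mv_zero : mv_car;
  mv_assoc : forall x y z, mv_add x (mv_add y z) = mv_add (mv_add x y) z;
  mv_comm : forall x y, mv_add x y = mv_add y x;
  mv_add0 : forall x, mv_add x mv_zero = x;
  mv_negK : forall x, mv_neg (mv_neg x) = x;
  mv_add1 : forall x, mv_add x (mv_neg mv_zero) = mv_neg mv_zero;
  mv_luk : forall x y,
    mv_add (mv_neg (mv_add (mv_neg x) y)) y = mv_add (mv_neg (mv_add (mv_neg y) x)) x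
}.

Arguments mv_add {m}.
Arguments mv_neg {m}.
Arguments mv_zero {m}.

Section Ops.
Context {A : MVAlgebra}.
Definition mv_one : A := mv_neg mv_zero.
Definition mv_odot (a b : A) : A := mv_neg (mv_add (mv_neg a) (mv_neg b)).
Definition mv_vee (a b : A) : A := mv_add (mv_neg (mv_add (mv_neg a) b)) b.
Definition mv_wedge (a b : A) : A := mv_neg (mv_vee (mv_neg a) (mv_neg b)).
Definition mv_le (a b : A) : Prop := mv_add (mv_neg a) b = mv_one.

Definition is_ideal (I : A -> Prop) : Prop :=
  I mv_zero /\ (forall a b, I a -> I b -> I (mv_add a b)) /\
  (forall a b, I a -> mv_le b a -> I b).

Definition is_maximal (I : A -> Prop) : Prop :=
  is_ideal I /\ ~ I mv_one /\
  (forall J, is_ideal J -> (forall x, I x -> J x) ->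
     (forall x, J x -> I x) \/ (forall x, J x)).
End Ops.

Definition MaxN (N : MVAlgebra) : Type := { I : N -> Prop | is_maximal I }.

Definition semisimple (N : MVAlgebra) : Prop :=
  forall b : N, (forall I : N -> Prop, is_maximal I -> I b) -> b = mv_zero.

Definition is_prob_map {M N : MVAlgebra} (p : M -> N) : Prop :=
  (forall a b, p (mv_add a b) = mv_add (p a) (p (mv_wedge b (mv_neg a)))) /\
  (forall a, p (mv_neg a) = mv_neg (p a)) /\
  p mv_one = mv_one.

Definition is_state {M : MVAlgebra} (s : M -> R) : Prop :=
  (forall a, 0 <= s a <= 1) /\ s mv_one = 1 /\
  (forall a b, mv_odot a b = mv_zero -> s (mv_add a b) = s a + s b).

Definition is_unit_hom {N : MVAlgebra} (h : N -> R) : Prop :=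
  (forall b, 0 <= h b <= 1) /\ h mv_zero = 0 /\
  (forall b, h (mv_neg b) = 1 - h b) /\
  (forall a b, h (mv_add a b) = Rmin 1 (h a + h b)).

(** h_n composed with the quotient map N -> N/n: the (unique) MV-homomorphism
    N -> [0,1] whose kernel is n. *)
Definition hom_of_max {N : MVAlgebra} (n : N -> Prop) : N -> R :=
  epsilon (inhabits (fun _ : N => 0))
    (fun h => is_unit_hom h /\ forall b, h b = 0 <-> n b).

Definition star {N : MVAlgebra} (b : N) (n : MaxN N) : R :=
  hom_of_max (proj1_sig n) b.

(** the dual p' : Max N -> St M (as a map into [0,1]^M) *)
Definition dual {M N : MVAlgebra} (p : M -> N) (n : MaxN N) : M -> R :=
  fun a => star (p a) n.

Definition is_topology {X : Type} (T : (X -> Prop) -> Prop) : Prop :=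
  T (fun _ => True) /\
  (forall U V, T U -> T V -> T (fun x => U x /\ V x)) /\
  (forall F : (X -> Prop) -> Prop, (forall U, F U -> T U) ->
     T (fun x => exists U, F U /\ U x)).

Definition gen_open {X : Type} (S : (X -> Prop) -> Prop) (U : X -> Prop) : Prop :=
  forall T : (X -> Prop) -> Prop, is_topology T -> (forall B, S B -> T B) -> T U.

Definition max_open (N : MVAlgebra) : (MaxN N -> Prop) -> Prop :=
  gen_open (fun B => exists b : N, B = fun n => ~ proj1_sig n b).

Definition ptw_open (M : MVAlgebra) : ((M -> R) -> Prop) -> Prop :=
  gen_open (fun B => exists (a : M) (U : R -> Prop),
                       open_set U /\ B = fun g => U (g a)).

(** continuity of f : Max N -> R^M (for f with values in St M this is
    continuity into the subspace St M of [0,1]^M) *)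
Definition continuous_max_ptw {M N : MVAlgebra} (f : MaxN N -> M -> R) : Prop :=
  forall V, ptw_open M V -> max_open N (fun n => V (f n)).

(* Main.v *)
Require Import Defs.
From Stdlib Require Import Reals.
From Stdlib Require Import Lra Lia Arith ZArith ClassicalEpsilon FunctionalExtensionality PropExtensionality Classical.

Section MVBasics.
Context {A : MVAlgebra}.
Implicit Types x y z a b c d u v w : A.

Local Notation "x ⊕ y" := (@mv_add A x y) (at level 50, left associativity).
Local Notation "¬ x" := (@mv_neg A x) (at level 35, right associativity).
Local Notation "x ⊙ y" := (@mv_odot A x y) (at level 40, left associativity).
Local Notation z0 := (@mv_zero A).
Local Notation z1 := (@mv_one A).

Lemma addA x y z : x ⊕ (y ⊕ z) = x ⊕ y ⊕ z. Proof. apply mv_assoc. Qed.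
Lemma addC x y : x ⊕ y = y ⊕ x. Proof. apply mv_comm. Qed.
Lemma add0 x : x ⊕ z0 = x. Proof. apply mv_add0. Qed.
Lemma add0l x : z0 ⊕ x = x. Proof. rewrite addC; apply add0. Qed.
Lemma negK x : ¬ ¬ x = x. Proof. apply mv_negK. Qed.
Lemma add1 x : x ⊕ z1 = z1. Proof. apply mv_add1. Qed.
Lemma add1l x : z1 ⊕ x = z1. Proof. rewrite addC; apply add1. Qed.
Lemma neg1 : ¬ z1 = z0. Proof. unfold mv_one; apply negK. Qed.
Lemma neg0 : ¬ z0 = z1. Proof. reflexivity. Qed.
Lemma addN x : x ⊕ ¬ x = z1.
Proof.
  pose proof (mv_luk A x z1) as H. fold (@mv_one A) in H.
  rewrite add1 in H. change (mv_neg (mv_neg mv_zero)) with (¬ z1) in H.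
  rewrite neg1, add0l in H. rewrite addC. symmetry; exact H.
Qed.
Lemma Nadd x : ¬ x ⊕ x = z1. Proof. rewrite addC; apply addN. Qed.
Lemma odot_def x y : x ⊙ y = ¬ (¬ x ⊕ ¬ y). Proof. reflexivity. Qed.
Lemma negodot x y : ¬ (x ⊙ y) = ¬ x ⊕ ¬ y. Proof. unfold mv_odot; apply negK. Qed.
Lemma negadd x y : ¬ (x ⊕ y) = ¬ x ⊙ ¬ y. Proof. unfold mv_odot; rewrite !negK; reflexivity. Qed.
Lemma odotC x y : x ⊙ y = y ⊙ x. Proof. unfold mv_odot; rewrite addC; reflexivity. Qed.
Lemma odotA x y z : x ⊙ (y ⊙ z) = x ⊙ y ⊙ z.
Proof. unfold mv_odot; rewrite !negK, addA; reflexivity. Qed.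
Lemma odot1 x : x ⊙ z1 = x. Proof. unfold mv_odot; rewrite neg1, add0, negK; reflexivity. Qed.
Lemma odot1l x : z1 ⊙ x = x. Proof. rewrite odotC; apply odot1. Qed.
Lemma odot0 x : x ⊙ z0 = z0. Proof. unfold mv_odot; rewrite neg0, add1, neg1; reflexivity. Qed.
Lemma odot0l x : z0 ⊙ x = z0. Proof. rewrite odotC; apply odot0. Qed.
Lemma odotN x : x ⊙ ¬ x = z0. Proof. unfold mv_odot; rewrite negK, Nadd, neg1; reflexivity. Qed.
Lemma Nodot x : ¬ x ⊙ x = z0. Proof. rewrite odotC; apply odotN. Qed.
Lemma veeC a b : mv_vee a b = mv_vee b a. Proof. unfold mv_vee; apply mv_luk. Qed.
Lemma vee_odot u v : (u ⊙ ¬ v) ⊕ v = mv_vee u v.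
Proof. unfold mv_odot, mv_vee; rewrite !negK; reflexivity. Qed.
Lemma vee_odot' u v : (u ⊙ v) ⊕ ¬ v = mv_vee u (¬ v).
Proof. rewrite <- vee_odot, negK; reflexivity. Qed.
Lemma wedge_eq a b : mv_wedge a b = (a ⊕ ¬ b) ⊙ b.
Proof. unfold mv_wedge, mv_vee, mv_odot; rewrite !negK; reflexivity. Qed.
Lemma wedgeC a b : mv_wedge a b = mv_wedge b a.
Proof. unfold mv_wedge; rewrite veeC; reflexivity. Qed.

Lemma le_add x c : mv_le x (x ⊕ c).
Proof. unfold mv_le. rewrite addA, Nadd, add1l. reflexivity. Qed.
Lemma le_addl x c : mv_le x (c ⊕ x).
Proof. rewrite addC; apply le_add. Qed.
Lemma le_ex a b : mv_le a b -> b = a ⊕ (b ⊙ ¬ a).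
Proof.
  intro H. rewrite (addC a), vee_odot, veeC. unfold mv_vee. unfold mv_le in H.
  rewrite H, neg1, add0l. reflexivity.
Qed.
Lemma le_refl a : mv_le a a. Proof. unfold mv_le; apply Nadd. Qed.
Lemma le_trans a b c : mv_le a b -> mv_le b c -> mv_le a c.
Proof.
  intros H1 H2. pose proof (le_ex _ _ H2) as E2. pose proof (le_ex _ _ H1) as E1.
  revert E2 E1. generalize (c ⊙ ¬ b) (b ⊙ ¬ a). intros d e E2 E1.
  rewrite E2, E1, <- addA. apply le_add.
Qed.
Lemma le_vee_eq a b : mv_le a b -> mv_vee a b = b.
Proof. intro H. unfold mv_vee. unfold mv_le in H. rewrite H, neg1, add0l; reflexivity. Qed.
Lemma le_antisym a b : mv_le a b -> mv_le b a -> a = b.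
Proof.
  intros H1 H2. rewrite <- (le_vee_eq _ _ H1), veeC. symmetry; apply le_vee_eq; auto.
Qed.
Lemma le_addr a b c : mv_le a b -> mv_le (a ⊕ c) (b ⊕ c).
Proof.
  intro H. pose proof (le_ex _ _ H) as E. revert E. generalize (b ⊙ ¬ a). intros e E.
  rewrite E, <- addA, (addC e c), addA. apply le_add.
Qed.
Lemma le_addl2 a b c : mv_le a b -> mv_le (c ⊕ a) (c ⊕ b).
Proof. intro H. rewrite (addC c a), (addC c b). apply le_addr; auto. Qed.
Lemma le_add2 a b c d : mv_le a b -> mv_le c d -> mv_le (a ⊕ c) (b ⊕ d).
Proof. intros H1 H2. apply le_trans with (b ⊕ c). apply le_addr; auto. apply le_addl2; auto. Qed.
Lemma le_1 a : mv_le a z1. Proof. unfold mv_le; apply add1. Qed.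
Lemma le_0 a : mv_le z0 a. Proof. unfold mv_le; rewrite neg0; apply add1l. Qed.
Lemma one_le a : mv_le z1 a -> a = z1. Proof. unfold mv_le; rewrite neg1, add0l; auto. Qed.
Lemma le_0_eq a : mv_le a z0 -> a = z0. Proof. intro; apply le_antisym; auto; apply le_0. Qed.
Lemma le_neg a b : mv_le a b -> mv_le (¬ b) (¬ a).
Proof. unfold mv_le; rewrite negK, addC; auto. Qed.
Lemma le_odot a b c : mv_le a b -> mv_le (a ⊙ c) (b ⊙ c).
Proof. intro H. unfold mv_odot. apply le_neg, le_addr, le_neg; auto. Qed.
Lemma le_odotl a b c : mv_le a b -> mv_le (c ⊙ a) (c ⊙ b).
Proof. intro H. rewrite (odotC c a), (odotC c b). apply le_odot; auto. Qed.
Lemma odot_le x y : mv_le (x ⊙ y) x.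
Proof.
  unfold mv_le, mv_odot. rewrite negK, (addC (¬ x ⊕ ¬ y) x), addA, addN, add1l. reflexivity.
Qed.
Lemma odot_le_r x y : mv_le (x ⊙ y) y.
Proof. rewrite odotC; apply odot_le. Qed.
Lemma le_vee_r x y : mv_le y (mv_vee x y). Proof. unfold mv_vee; apply le_addl. Qed.
Lemma le_vee_l x y : mv_le x (mv_vee x y). Proof. rewrite veeC; apply le_vee_r. Qed.
Lemma wedge_le_r a b : mv_le (mv_wedge a b) b. Proof. rewrite wedge_eq; apply odot_le_r. Qed.
Lemma wedge_le_l a b : mv_le (mv_wedge a b) a. Proof. rewrite wedgeC; apply wedge_le_r. Qed.
Lemma odot0_le a b : a ⊙ b = z0 -> mv_le a (¬ b).
Proof. intro H. unfold mv_le. rewrite <- negodot, H. reflexivity. Qed.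
Lemma le_odot0 a b : mv_le a (¬ b) -> a ⊙ b = z0.
Proof. unfold mv_le. intro H. unfold mv_odot. rewrite H, neg1. reflexivity. Qed.
Lemma odot_le_wedge a b : mv_le (a ⊙ b) (mv_wedge a b).
Proof.
  rewrite wedgeC, wedge_eq, (odotC a b). apply le_odot. apply le_add.
Qed.
Lemma le_one_eq x : mv_le z1 x -> x = z1. Proof. apply one_le. Qed.

Lemma K1 a b : (a ⊙ b) ⊕ (a ⊕ b) = a ⊕ b.
Proof.
  assert (E1 : a ⊕ b = b ⊕ ((a ⊕ b) ⊙ ¬ b)) by (apply le_ex; apply le_addl).
  assert (E2 : (a ⊕ b) ⊙ ¬ b = a ⊙ ¬ (a ⊙ b)).
  { rewrite negodot. pattern b at 1. rewrite <- (negK b). rewrite <- wedge_eq.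
    rewrite wedgeC, wedge_eq, (addC (¬ b) (¬ a)), odotC. reflexivity. }
  assert (E3 : a = (a ⊙ b) ⊕ (a ⊙ ¬ (a ⊙ b))) by (apply le_ex; apply odot_le).
  rewrite E1 at 1. rewrite E2, addA, (addC (a ⊙ b) b), <- addA, <- E3, addC. reflexivity.
Qed.

Lemma prelin u v : mv_wedge (u ⊙ ¬ v) (v ⊙ ¬ u) = z0.
Proof.
  unfold mv_wedge. rewrite !negodot, !negK.
  assert (H : mv_vee (¬ u ⊕ v) (¬ v ⊕ u) = z1).
  { unfold mv_vee. rewrite (negadd (¬ u) v), negK.
    replace (u ⊙ ¬ v ⊕ (¬ v ⊕ u)) with (¬ v ⊕ u).
    - apply Nadd.
    - rewrite (addC (¬ v) u). symmetry; apply K1. }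
  rewrite H; apply neg1.
Qed.

Fixpoint mul (k : nat) x : A := match k with O => z0 | S k => x ⊕ mul k x end.

Lemma mul_add k k' x : mul (k + k') x = mul k x ⊕ mul k' x.
Proof. induction k; simpl. rewrite add0l; auto. rewrite IHk, addA; auto. Qed.

Lemma wedge0_add x y z :
  mv_wedge x y = z0 -> mv_wedge z y = z0 -> mv_wedge (x ⊕ z) y = z0.
Proof.
  intros H1 H2.
  assert (F : forall t, mv_wedge t y = y ⊙ (¬ y ⊕ t)).
  { intro t. rewrite wedge_eq, odotC, addC. reflexivity. }
  assert (Hy : mv_le y (y ⊙ ¬ x)).
  { rewrite F in H1. apply odot0_le in H1. rewrite odot_def, negK. exact H1. }
  apply le_0_eq. rewrite F. rewrite <- H2, F.
  apply le_trans with ((y ⊙ ¬ x) ⊙ (¬ y ⊕ (x ⊕ z))).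
  - apply le_odot; auto.
  - rewrite <- odotA. apply le_odotl.
    replace (¬ y ⊕ (x ⊕ z)) with ((¬ y ⊕ z) ⊕ x).
    + replace (¬ x ⊙ (¬ y ⊕ z ⊕ x)) with (mv_wedge (¬ y ⊕ z) (¬ x)).
      * apply wedge_le_l.
      * rewrite wedge_eq, negK, odotC; reflexivity.
    + rewrite <- addA, (addC z x). reflexivity.
Qed.

Lemma wedge0_mul k x y : mv_wedge x y = z0 -> mv_wedge (mul k x) y = z0.
Proof.
  intro H. induction k; simpl.
  - apply le_0_eq, wedge_le_l.
  - apply wedge0_add; auto.
Qed.

End MVBasics.

From Stdlib Require Import List Permutation.
Import ListNotations.

Inductive acex := Atom (k : nat) | Plus (e1 e2 : acex).

Section AC.
Context {A : MVAlgebra}.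
Fixpoint ac_eval (env : list A) (e : acex) : A :=
  match e with Atom k => nth k env mv_zero | Plus e1 e2 => mv_add (ac_eval env e1) (ac_eval env e2) end.
Fixpoint ac_flat (e : acex) : list nat :=
  match e with Atom k => [k] | Plus e1 e2 => ac_flat e1 ++ ac_flat e2 end.
Definition ac_evall (env : list A) (l : list nat) : A :=
  fold_right (fun k acc => mv_add (nth k env mv_zero) acc) mv_zero l.
Lemma ac_evall_app env l1 l2 : ac_evall env (l1 ++ l2) = mv_add (ac_evall env l1) (ac_evall env l2).
Proof. induction l1; simpl. rewrite add0l; auto. rewrite IHl1, addA; auto. Qed.
Lemma ac_eval_flat env e : ac_eval env e = ac_evall env (ac_flat e).
Proof. induction e; simpl. rewrite add0; auto. rewrite ac_evall_app, IHe1, IHe2; auto. Qed.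
Lemma ac_evall_perm env l1 l2 : Permutation l1 l2 -> ac_evall env l1 = ac_evall env l2.
Proof.
  induction 1; simpl; auto.
  - rewrite IHPermutation; auto.
  - rewrite !addA, (addC (nth y env mv_zero)); auto.
  - congruence.
Qed.
Fixpoint ins (k : nat) (l : list nat) : list nat :=
  match l with [] => [k] | h :: t => if Nat.leb k h then k :: h :: t else h :: ins k t end.
Fixpoint isort (l : list nat) : list nat := match l with [] => [] | h :: t => ins h (isort t) end.
Lemma ins_perm k l : Permutation (k :: l) (ins k l).
Proof.
  induction l; simpl. auto. destruct (Nat.leb k a). auto.
  eapply perm_trans. apply perm_swap. apply perm_skip; auto.
Qed.
Lemma isort_perm l : Permutation l (isort l).
Proof. induction l; simpl; auto. eapply perm_trans. apply perm_skip; eauto. apply ins_perm. Qed.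
Lemma ac_correct env e1 e2 : isort (ac_flat e1) = isort (ac_flat e2) -> ac_eval env e1 = ac_eval env e2.
Proof.
  intro H. rewrite !ac_eval_flat. rewrite (ac_evall_perm env _ _ (isort_perm (ac_flat e1))).
  rewrite (ac_evall_perm env _ _ (isort_perm (ac_flat e2))), H; auto.
Qed.
End AC.

Ltac ac_inlist a l := match l with
 | nil => constr:(false)
 | cons a _ => constr:(true)
 | cons _ ?l' => ac_inlist a l'
end.
Ltac ac_collect t l := match t with
 | @mv_add _ ?a ?b => let l1 := ac_collect a l in ac_collect b l1
 | _ => let b := ac_inlist t l in match b with true => l | false => constr:(cons t l) end
end.
Ltac ac_idx a l := match l with
 | cons a _ => constr:(O)
 | cons _ ?l' => let k := ac_idx a l' in constr:(S k)
end.
Ltac ac_reify t l := match t with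
 | @mv_add _ ?a ?b => let r1 := ac_reify a l in let r2 := ac_reify b l in constr:(Plus r1 r2)
 | _ => let k := ac_idx t l in constr:(Atom k)
end.
Ltac ac_eq := match goal with
 | |- @eq (mv_car ?M) ?L ?R =>
   let l0 := constr:(@nil (mv_car M)) in
   let l1 := ac_collect L l0 in let l := ac_collect R l1 in
   let e1 := ac_reify L l in let e2 := ac_reify R l in
   change (ac_eval l e1 = ac_eval l e2); apply ac_correct; vm_compute; reflexivity
end.

Section Chain.
Context {A : MVAlgebra}.
Implicit Types x y z a b c d u v w : A.

Local Notation "x ⊕ y" := (@mv_add A x y) (at level 50, left associativity).
Local Notation "¬ x" := (@mv_neg A x) (at level 35, right associativity).
Local Notation "x ⊙ y" := (@mv_odot A x y) (at level 40, left associativity).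
Local Notation z0 := (@mv_zero A).
Local Notation z1 := (@mv_one A).

Variable n : A -> Prop.
Hypothesis Hn : is_maximal n.

Lemma n0 : n z0. Proof. destruct Hn as [[H _] _]; auto. Qed.
Lemma n_add a b : n a -> n b -> n (a ⊕ b). Proof. destruct Hn as [[_ [H _]] _]; auto. Qed.
Lemma n_down a b : n a -> mv_le b a -> n b. Proof. destruct Hn as [[_ [_ H]] _]; eauto. Qed.
Lemma n1 : ~ n z1. Proof. destruct Hn as [_ [H _]]; auto. Qed.
Lemma n_eq a b : n a -> b = a -> n b. Proof. intros; subst; auto. Qed.

Lemma arch x : ~ n x -> exists k, n (¬ mul k x).
Proof.
  intro Hx.
  set (J := fun z => exists k i, n i /\ mv_le z (mul k x ⊕ i)).
  assert (HJ : is_ideal J).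
  { split; [|split].
    - exists O, z0. split. apply n0. apply le_0.
    - intros a b [k [i [Hi Ha]]] [k' [i' [Hi' Hb]]].
      exists (k + k')%nat, (i ⊕ i'). split. apply n_add; auto.
      rewrite mul_add. eapply le_trans. apply le_add2; eauto.
      rewrite !addA. apply le_addr. rewrite <- !addA. apply le_addl2. rewrite addC. apply le_refl.
    - intros a b [k [i [Hi Ha]]] Hba. exists k, i. split; auto. eapply le_trans; eauto. }
  destruct Hn as [_ [_ Hm]].
  destruct (Hm J HJ) as [H | H].
  - intros z Hz. exists O, z. split; auto. simpl. rewrite add0l. apply le_refl.
  - exfalso. apply Hx. apply H. exists 1%nat, z0. split. apply n0. simpl. rewrite !add0. apply le_refl.
  - destruct (H z1) as [k [i [Hi H1]]]. exists k. apply n_down with i; auto.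
    apply one_le in H1. unfold mv_le. rewrite negK. auto.
Qed.

Definition mpre u v := n (u ⊙ ¬ v).
Definition meqv u v := mpre u v /\ mpre v u.

Lemma le_pre a b : mv_le a b -> mpre a b.
Proof.
  intro H. unfold mpre. apply n_eq with z0. apply n0.
  apply le_0_eq. apply le_trans with (b ⊙ ¬ b). apply le_odot; auto. rewrite odotN; apply le_refl.
Qed.
Lemma pre_refl u : mpre u u. Proof. apply le_pre, le_refl. Qed.
Lemma eq_eqv u v : u = v -> meqv u v. Proof. intros; subst; split; apply pre_refl. Qed.

Lemma pre_trans u v w : mpre u v -> mpre v w -> mpre u w.
Proof.
  unfold mpre. intros H1 H2. apply n_down with (u ⊙ ¬ v ⊕ v ⊙ ¬ w). apply n_add; auto.
  unfold mv_le. apply one_le. rewrite negodot, negK.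
  apply le_trans with (¬ v ⊕ v). rewrite Nadd; apply le_refl.
  replace (¬ u ⊕ w ⊕ (u ⊙ ¬ v ⊕ v ⊙ ¬ w)) with ((u ⊙ ¬ v ⊕ ¬ u) ⊕ (v ⊙ ¬ w ⊕ w)).
  - apply le_add2.
    + replace (u ⊙ ¬ v) with (¬ v ⊙ ¬ ¬ u) by (rewrite negK, odotC; auto).
      rewrite vee_odot. apply le_vee_l.
    + rewrite vee_odot. apply le_vee_l.
  - ac_eq.
Qed.

Lemma pre_addr u v w : mpre u v -> mpre (u ⊕ w) (v ⊕ w).
Proof.
  unfold mpre. intro H. apply n_down with (u ⊙ ¬ v); auto.
  unfold mv_le. apply one_le. rewrite negodot, negK.
  apply le_trans with (¬ (u ⊕ w) ⊕ (u ⊕ w)). rewrite Nadd; apply le_refl.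
  replace (¬ (u ⊕ w) ⊕ (v ⊕ w) ⊕ u ⊙ ¬ v) with (¬ (u ⊕ w) ⊕ (w ⊕ (u ⊙ ¬ v ⊕ v))) by ac_eq.
  apply le_addl2. rewrite (addC u w). apply le_addl2. rewrite vee_odot. apply le_vee_l.
Qed.
Lemma pre_addl u v w : mpre u v -> mpre (w ⊕ u) (w ⊕ v).
Proof. intro H. rewrite (addC w u), (addC w v). apply pre_addr; auto. Qed.
Lemma pre_neg u v : mpre u v -> mpre (¬ v) (¬ u).
Proof. unfold mpre. rewrite negK, odotC; auto. Qed.
Lemma pre_neg' u v : mpre (¬ v) (¬ u) -> mpre u v.
Proof. intro H. apply pre_neg in H. rewrite !negK in H; auto. Qed.
Lemma pre_odotr u v w : mpre u v -> mpre (u ⊙ w) (v ⊙ w).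
Proof. intro H. unfold mv_odot. apply pre_neg, pre_addr, pre_neg; auto. Qed.
Lemma pre_odotl u v w : mpre u v -> mpre (w ⊙ u) (w ⊙ v).
Proof. intro H. rewrite (odotC w u), (odotC w v). apply pre_odotr; auto. Qed.
Lemma pre_n z : mpre z z0 <-> n z.
Proof. unfold mpre. rewrite neg0, odot1. tauto. Qed.
Lemma pre_0 z : mpre z0 z. Proof. apply le_pre, le_0. Qed.
Lemma pre_1 z : mpre z z1. Proof. apply le_pre, le_1. Qed.
Lemma pre_1' z : mpre z1 z <-> n (¬ z). Proof. unfold mpre. rewrite odot1l. tauto. Qed.
Lemma n_pre a b : n a -> mpre b a -> n b.
Proof.
  intros Ha H. apply pre_n. apply pre_trans with a; auto. apply pre_n; auto.
Qed.
Lemma n_eqv a b : n a -> meqv a b -> n b.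
Proof. intros Ha [_ H]. apply n_pre with a; auto. Qed.
Lemma pre_odot_self x y : mpre (x ⊙ y) x. Proof. apply le_pre, odot_le. Qed.
Lemma pre_odot_self_r x y : mpre (x ⊙ y) y. Proof. apply le_pre, odot_le_r. Qed.
Lemma pre_add_self x y : mpre x (x ⊕ y). Proof. apply le_pre, le_add. Qed.
Lemma pre_add_self_l x y : mpre x (y ⊕ x). Proof. apply le_pre, le_addl. Qed.
Lemma resid a b c : mpre (a ⊙ b) c <-> mpre a (¬ b ⊕ c).
Proof.
  unfold mpre. rewrite negadd, negK, odotA. tauto.
Qed.
Lemma pre_n_both a b : n a -> mpre a b.
Proof. intro H. apply n_down with a; auto. apply odot_le. Qed.

Lemma total u v : mpre u v \/ mpre v u.
Proof.
  destruct (classic (mpre u v)) as [H|H]; auto.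
  destruct (classic (mpre v u)) as [H'|H']; auto.
  exfalso. unfold mpre in H, H'.
  destruct (arch _ H) as [k Hk]. destruct (arch _ H') as [k' Hk'].
  set (a := u ⊙ ¬ v) in *. set (b := v ⊙ ¬ u) in *.
  set (K := (k + k')%nat).
  assert (Ha : n (¬ mul K a)).
  { apply n_down with (¬ mul k a); auto. apply le_neg. unfold K. rewrite mul_add. apply le_add. }
  assert (Hb : n (¬ mul K b)).
  { apply n_down with (¬ mul k' b); auto. apply le_neg. unfold K. rewrite mul_add. apply le_addl. }
  assert (W : mv_wedge (mul K b) (mul K a) = z0).
  { apply wedge0_mul. rewrite wedgeC. apply wedge0_mul. apply prelin. }
  assert (O : mul K b ⊙ mul K a = z0).
  { apply le_0_eq. rewrite <- W. apply odot_le_wedge. }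
  apply n1. apply n_eq with (¬ mul K b ⊕ ¬ mul K a). apply n_add; auto.
  rewrite <- negodot, O. reflexivity.
Qed.

Lemma eqv_refl u : meqv u u. Proof. apply eq_eqv; auto. Qed.
Lemma eqv_sym u v : meqv u v -> meqv v u. Proof. unfold meqv; tauto. Qed.
Lemma eqv_trans u v w : meqv u v -> meqv v w -> meqv u w.
Proof. intros [H1 H2] [H3 H4]; split; eapply pre_trans; eauto. Qed.
Lemma eqv_add u v u' v' : meqv u u' -> meqv v v' -> meqv (u ⊕ v) (u' ⊕ v').
Proof.
  intros [H1 H2] [H3 H4]; split.
  - apply pre_trans with (u' ⊕ v). apply pre_addr; auto. apply pre_addl; auto.
  - apply pre_trans with (u ⊕ v'). apply pre_addr; auto. apply pre_addl; auto.
Qed.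
Lemma eqv_neg u v : meqv u v -> meqv (¬ u) (¬ v).
Proof. intros [H1 H2]; split; apply pre_neg; auto. Qed.
Lemma eqv_odot u v u' v' : meqv u u' -> meqv v v' -> meqv (u ⊙ v) (u' ⊙ v').
Proof. intros. unfold mv_odot. apply eqv_neg, eqv_add; apply eqv_neg; auto. Qed.
Lemma pre_eqv_l u u' v : meqv u u' -> mpre u' v -> mpre u v.
Proof. intros [H _] H'. eapply pre_trans; eauto. Qed.
Lemma pre_eqv_r u v v' : meqv v v' -> mpre u v' -> mpre u v.
Proof. intros [_ H] H'. eapply pre_trans; eauto. Qed.
Lemma n_both_eqv a b : n a -> n b -> meqv a b.
Proof. intros; split; apply pre_n_both; auto. Qed.

Lemma vee_eqv_r u v : mpre u v -> meqv (mv_vee u v) v.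
Proof.
  intro H. split.
  - rewrite <- vee_odot.
    assert (H0 : mpre ((u ⊙ ¬ v) ⊕ v) (z0 ⊕ v)) by (apply pre_addr; apply pre_n; exact H).
    rewrite add0l in H0. exact H0.
  - apply le_pre, le_vee_r.
Qed.
Lemma vee_eqv_l u v : mpre v u -> meqv (mv_vee u v) u.
Proof. intro H. rewrite veeC. apply vee_eqv_r; auto. Qed.
Lemma wedge_eqv a b : mpre a b -> meqv (mv_wedge a b) a.
Proof.
  intro H. unfold mv_wedge. rewrite <- (negK a) at 2. apply eqv_neg.
  apply vee_eqv_l. apply pre_neg; auto.
Qed.
Lemma canc_eqv a c : n (a ⊙ c) -> meqv ((a ⊕ c) ⊙ ¬ c) a.
Proof.
  intro H. replace ((a ⊕ c) ⊙ ¬ c) with (mv_wedge a (¬ c)) by (rewrite wedge_eq, negK; auto).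
  apply wedge_eqv. unfold mpre. rewrite negK; auto.
Qed.
Lemma cancel a b c : n (a ⊙ c) -> n (b ⊙ c) -> meqv (a ⊕ c) (b ⊕ c) -> meqv a b.
Proof.
  intros Ha Hb H. eapply eqv_trans. apply eqv_sym, (canc_eqv a c); auto.
  eapply eqv_trans. 2: apply (canc_eqv b c); auto. apply eqv_odot; auto. apply eqv_refl.
Qed.
Lemma pre_cancel a b c : n (a ⊙ c) -> mpre (a ⊕ c) (b ⊕ c) -> mpre a b.
Proof.
  intros Ha H. apply pre_eqv_l with ((a ⊕ c) ⊙ ¬ c). apply eqv_sym, canc_eqv; auto.
  apply pre_trans with ((b ⊕ c) ⊙ ¬ c). apply pre_odotr; auto.
  replace ((b ⊕ c) ⊙ ¬ c) with (mv_wedge b (¬ c)) by (rewrite wedge_eq, negK; auto).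
  apply le_pre, wedge_le_l.
Qed.

Lemma AM a b c : n (a ⊙ b) -> n (¬ (b ⊕ c)) -> meqv ((a ⊕ b) ⊙ c) (a ⊕ (b ⊙ c)).
Proof.
  intros H1 H2.
  assert (Hcb : mpre (¬ c) b).
  { unfold mpre. rewrite odotC. rewrite negadd in H2. exact H2. }
  assert (Hbc : mpre (¬ b) c).
  { apply pre_neg in Hcb. rewrite negK in Hcb; auto. }
  apply (cancel _ _ (¬ c)).
  - change (mpre ((a ⊕ b) ⊙ c) c). apply pre_odot_self_r.
  - change (mpre (a ⊕ b ⊙ c) c).
    apply pre_trans with (¬ b ⊕ b ⊙ c).
    + apply pre_addr. unfold mpre. rewrite negK. auto.
    + rewrite addC, (odotC b c), vee_odot'. apply (vee_eqv_l _ _ Hbc).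
  - apply eqv_trans with (a ⊕ b).
    + rewrite vee_odot'. apply vee_eqv_l. apply pre_trans with b; auto. apply pre_add_self_l.
    + rewrite <- addA, vee_odot'. apply eqv_add. apply eqv_refl. apply eqv_sym, vee_eqv_l. auto.
Qed.


Lemma small_pre x : n (x ⊙ x) <-> mpre x (¬ x).
Proof. unfold mpre. rewrite negK. tauto. Qed.
Lemma big_pre x : ~ n (x ⊙ x) -> mpre (¬ x) x.
Proof.
  intro H. destruct (total x (¬ x)) as [H'|H']; auto. exfalso; apply H, small_pre; auto.
Qed.
Lemma nodot_pre x y : n (x ⊙ y) <-> mpre x (¬ y).
Proof. unfold mpre. rewrite negK. tauto. Qed.

Lemma I3 x y : ~ n (x ⊙ x) -> n (y ⊙ y) -> n (x ⊙ y) ->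
  meqv ((x ⊕ y) ⊙ (x ⊕ y)) ((x ⊙ x) ⊕ (y ⊕ y)) /\ n ((x ⊙ x) ⊙ (y ⊕ y)).
Proof.
  intros Hx Hy Hxy.
  pose proof (big_pre _ Hx) as hx. apply small_pre in Hy as hy.
  apply nodot_pre in Hxy as hxy.
  assert (hyx : mpre y (¬ x)) by (apply pre_neg in hxy; rewrite negK in hxy; auto).
  set (s := x ⊕ y).
  assert (E1 : meqv ((x ⊙ x) ⊕ ¬ x) x) by (rewrite vee_odot'; apply vee_eqv_l; auto).
  assert (E2 : meqv (y ⊕ ¬ s) (¬ x)).
  { unfold s. rewrite negadd, addC, vee_odot. apply vee_eqv_l; auto. }
  assert (E3 : meqv ((x ⊙ x) ⊕ (y ⊕ y) ⊕ ¬ s) s).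
  { replace ((x ⊙ x) ⊕ (y ⊕ y) ⊕ ¬ s) with (((x ⊙ x) ⊕ y) ⊕ (y ⊕ ¬ s)) by ac_eq.
    eapply eqv_trans. apply eqv_add. apply eqv_refl. exact E2.
    replace ((x ⊙ x) ⊕ y ⊕ ¬ x) with (((x ⊙ x) ⊕ ¬ x) ⊕ y) by ac_eq.
    unfold s. apply eqv_add; auto. apply eqv_refl. }
  assert (hs : mpre (¬ s) s).
  { apply pre_trans with (¬ x). apply pre_neg. apply pre_add_self.
    apply pre_trans with x; auto. apply pre_add_self. }
  assert (E4 : meqv ((s ⊙ s) ⊕ ¬ s) s) by (rewrite vee_odot'; apply vee_eqv_l; auto).
  split.
  - apply (cancel _ _ (¬ s)).
    + apply pre_odot_self.
    + change (mpre (x ⊙ x ⊕ (y ⊕ y)) s). apply pre_trans with (x ⊙ x ⊕ (y ⊕ y) ⊕ ¬ s).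
      apply pre_add_self. apply E3.
    + eapply eqv_trans. exact E4. apply eqv_sym; auto.
  - rewrite <- odotA. apply n_pre with (x ⊙ y); auto. apply pre_odotl.
    apply pre_trans with (¬ y ⊙ (y ⊕ y)). apply pre_odotr; auto.
    rewrite odotC. apply resid. rewrite negK. apply pre_refl.
Qed.

Lemma negDD y : ¬ (y ⊕ y) ⊕ y = mv_vee (¬ y) y.
Proof. rewrite negadd; apply vee_odot. Qed.

Lemma I12w x y : n (x ⊙ x) -> n (y ⊙ y) -> mpre x y ->
  meqv ((x ⊕ y) ⊙ (x ⊕ y)) ((x ⊕ x) ⊙ (y ⊕ y)).
Proof.
  intros Hx Hy hxy.
  apply small_pre in Hx as hx. apply small_pre in Hy as hy.
  assert (hxny : mpre x (¬ y)) by (apply pre_trans with y; auto).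
  assert (nxy : n (x ⊙ y)) by (apply nodot_pre; auto).
  set (s := x ⊕ y).
  assert (hsD : mpre s (y ⊕ y)) by (apply pre_addr; auto).
  assert (EDy : meqv (¬ (y ⊕ y) ⊕ y) (¬ y)) by (rewrite negDD; apply vee_eqv_l; auto).
  destruct (total s (¬ s)) as [hsm | hbig].
  -
    apply n_both_eqv. apply small_pre; auto.
    apply pre_n. apply resid. rewrite add0.
    apply (pre_cancel _ _ y).
    + apply nodot_pre. apply pre_trans with s. apply pre_addl; auto.
      apply pre_trans with (¬ s); auto. apply pre_neg. apply pre_add_self_l.
    + apply pre_trans with (s ⊕ x). apply le_pre. unfold s.
      replace (x ⊕ x ⊕ y) with (x ⊕ y ⊕ x) by ac_eq. apply le_refl.
      apply pre_trans with (¬ s ⊕ x). apply pre_addr; auto.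
      apply pre_trans with (¬ y).
      * unfold s. rewrite negadd, odotC, vee_odot. apply vee_eqv_l; auto.
      * apply EDy.
  -
    assert (nDs : n (¬ (s ⊕ s))).
    { unfold mpre in hbig. rewrite negadd; auto. }
    apply (cancel _ _ (¬ (y ⊕ y))).
    + change (mpre (s ⊙ s) (y ⊕ y)). eapply pre_trans. apply pre_odot_self. auto.
    + change (mpre ((x ⊕ x) ⊙ (y ⊕ y)) (y ⊕ y)). apply pre_odot_self_r.
    + apply eqv_trans with (x ⊕ x).
      * eapply eqv_trans. rewrite addC. apply eqv_sym, AM; auto.
        -- apply nodot_pre. apply pre_neg. auto.
        -- eapply eqv_trans. apply eqv_odot. 2: apply eqv_refl.
           instantiate (1 := x ⊕ ¬ y).
           replace (¬ (y ⊕ y) ⊕ s) with ((¬ (y ⊕ y) ⊕ y) ⊕ x) by (unfold s; ac_eq).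
           rewrite (addC x). apply eqv_add; auto. apply eqv_refl.
           eapply eqv_trans. apply AM; auto.
           ++ apply n_eq with z0. apply n0. unfold s.
              replace (¬ y ⊕ (x ⊕ y)) with (x ⊕ (y ⊕ ¬ y)) by ac_eq.
              rewrite addN, add1, neg1. reflexivity.
           ++ apply eqv_add. apply eqv_refl. rewrite odotC. unfold s. apply canc_eqv; auto.
      * apply eqv_sym. rewrite vee_odot'. apply vee_eqv_l.
        unfold mpre. apply n_eq with (¬ (s ⊕ s)); auto.
        rewrite <- negadd. f_equal. unfold s. ac_eq.
Qed.

Lemma I12 x y : n (x ⊙ x) -> n (y ⊙ y) ->
  meqv ((x ⊕ y) ⊙ (x ⊕ y)) ((x ⊕ x) ⊙ (y ⊕ y)).
Proof.
  intros Hx Hy. destruct (total x y) as [h|h].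
  - apply I12w; auto.
  - rewrite (addC x y), (odotC (x ⊕ x)). apply I12w; auto.
Qed.

Open Scope R_scope.

Lemma approx0 (a C : R) : (forall k, Rabs a <= C * (/2)^k) -> a = 0.
Proof.
  intro H. destruct (Req_dec a 0) as [E|E]; auto. exfalso.
  assert (Ha : 0 < Rabs a) by (apply Rabs_pos_lt; auto).
  assert (HC : 0 <= C). { specialize (H O). simpl in H. pose proof (Rabs_pos a). lra. }
  assert (Hh : Rabs (/2) < 1) by (rewrite Rabs_right; lra).
  destruct (pow_lt_1_zero (/2) Hh (Rabs a / (C + 1))) as [N HN].
  { apply Rdiv_lt_0_compat; lra. }
  specialize (HN N (le_n N)). specialize (H N).
  rewrite Rabs_right in HN by (apply Rle_ge, pow_le; lra).
  assert (C * (/2)^N <= C * (Rabs a / (C+1))) by (apply Rmult_le_compat_l; lra).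
  assert (C * (Rabs a / (C + 1)) < Rabs a).
  { unfold Rdiv. apply Rmult_lt_reg_r with (C+1). lra.
    rewrite Rmult_assoc, Rmult_assoc, Rinv_l by lra. nra. }
  lra.
Qed.

Lemma approx (a b C : R) : (forall k, Rabs (a - b) <= C * (/2)^k) -> a = b.
Proof. intro H. apply approx0 in H. lra. Qed.

Lemma contraction {T : Type} (f : T -> R) (B : R) :
  (forall t, Rabs (f t) <= B) -> (forall t, exists t', Rabs (f t) <= Rabs (f t') / 2) ->
  forall t, f t = 0.
Proof.
  intros HB Hc.
  assert (K : forall k t, Rabs (f t) <= B * (/2)^k).
  { induction k; intro t; simpl. rewrite Rmult_1_r; auto.
    destruct (Hc t) as [t' Ht']. specialize (IHk t'). lra. }
  intro t. apply approx0 with B. intro k. apply K.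
Qed.

Definition bitR x : R := if excluded_middle_informative (n (x ⊙ x)) then 0 else 1.
Definition nxt x : A := if excluded_middle_informative (n (x ⊙ x)) then x ⊕ x else x ⊙ x.
Fixpoint Hk (k : nat) (x : A) : R :=
  match k with O => 0 | S k => (bitR x + Hk k (nxt x)) / 2 end.

Lemma bit_range x : 0 <= bitR x <= 1.
Proof. unfold bitR. destruct excluded_middle_informative; lra. Qed.
Lemma Hk_range k x : 0 <= Hk k x <= 1.
Proof.
  revert x; induction k; intro x; simpl. lra.
  pose proof (bit_range x). pose proof (IHk (nxt x)). lra.
Qed.
Lemma Hk_mono k x : Hk k x <= Hk (S k) x.
Proof.
  revert x; induction k; intro x.
  - simpl. pose proof (bit_range x). lra.
  - change (Hk (S k) x) with ((bitR x + Hk k (nxt x)) / 2).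
    change (Hk (S (S k)) x) with ((bitR x + Hk (S k) (nxt x)) / 2).
    pose proof (IHk (nxt x)). lra.
Qed.
Lemma Hk_mono' k i x : Hk k x <= Hk (k + i) x.
Proof.
  induction i. rewrite Nat.add_0_r; lra.
  rewrite Nat.add_succ_r. pose proof (Hk_mono (k + i) x). lra.
Qed.
Lemma Hk_tail k j x : Hk (k + j) x <= Hk k x + (/2)^k.
Proof.
  revert x; induction k; intro x; simpl.
  - pose proof (Hk_range j x). lra.
  - pose proof (IHk (nxt x)). lra.
Qed.
Lemma Hk_le_all j k x : Hk j x <= Hk k x + (/2)^k.
Proof.
  assert (0 < (/2)^k) by (apply pow_lt; lra).
  destruct (le_lt_dec j k) as [L|L].
  - replace k with (j + (k - j))%nat by lia. pose proof (Hk_mono' j (k - j) x).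
    replace (j + (k - j))%nat with k in * by lia. lra.
  - replace j with (k + (j - k))%nat by lia. apply Hk_tail.
Qed.

Definition hE x := fun r => exists k, r = Hk k x.
Lemma hE_bound x : bound (hE x).
Proof. exists 1. intros r [k ->]. apply Hk_range. Qed.
Lemma hE_ex x : exists r, hE x r.
Proof. exists 0, O. reflexivity. Qed.
Definition hh x : R := proj1_sig (completeness (hE x) (hE_bound x) (hE_ex x)).

Lemma hh_spec x : (forall k, Hk k x <= hh x) /\ (forall k, hh x <= Hk k x + (/2)^k).
Proof.
  unfold hh. destruct completeness as [m [Hub Hl]]. simpl. split.
  - intro k. apply Hub. exists k; auto.
  - intro k. apply Hl. intros r [j ->]. apply Hk_le_all.
Qed.
Lemma hh_range x : 0 <= hh x <= 1.
Proof.
  destruct (hh_spec x) as [H1 H2]. split.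
  - apply (H1 O).
  - unfold hh. destruct completeness as [m [Hub Hl]]. simpl. apply Hl.
    intros r [j ->]. apply Hk_range.
Qed.
Lemma hh_rec x : hh x = (bitR x + hh (nxt x)) / 2.
Proof.
  apply approx with 1. intro k.
  destruct (hh_spec x) as [A1 A2]. destruct (hh_spec (nxt x)) as [B1 B2].
  specialize (A1 (S k)). specialize (A2 (S k)). specialize (B1 k). specialize (B2 k).
  simpl in A1, A2. apply Rabs_le. lra.
Qed.

Lemma hh_small x : n (x ⊙ x) -> hh x = hh (x ⊕ x) / 2.
Proof.
  intro H. rewrite hh_rec. unfold bitR, nxt. destruct excluded_middle_informative; [lra| contradiction].
Qed.
Lemma hh_big x : ~ n (x ⊙ x) -> hh x = (1 + hh (x ⊙ x)) / 2.
Proof.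
  intro H. rewrite hh_rec. unfold bitR, nxt. destruct excluded_middle_informative; [contradiction| lra].
Qed.

Lemma Hk_eqv k x y : meqv x y -> Hk k x = Hk k y.
Proof.
  revert x y; induction k; intros x y H; simpl; auto.
  assert (Q : meqv (x ⊙ x) (y ⊙ y)) by (apply eqv_odot; auto).
  unfold bitR, nxt.
  destruct (excluded_middle_informative (n (x ⊙ x))) as [a|a];
  destruct (excluded_middle_informative (n (y ⊙ y))) as [b|b].
  - rewrite (IHk _ (y ⊕ y)); auto. apply eqv_add; auto.
  - exfalso. apply b. eapply n_eqv; eauto.
  - exfalso. apply a. eapply n_eqv; eauto. apply eqv_sym; auto.
  - rewrite (IHk _ (y ⊙ y)); auto.
Qed.
Lemma hh_eqv x y : meqv x y -> hh x = hh y.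
Proof.
  intro H. apply approx with 2. intro k.
  destruct (hh_spec x) as [A1 A2]. destruct (hh_spec y) as [B1 B2].
  specialize (A1 k). specialize (A2 k). specialize (B1 k). specialize (B2 k).
  rewrite (Hk_eqv k x y H) in *. apply Rabs_le. lra.
Qed.

Lemma hh_z0 : hh z0 = 0.
Proof.
  assert (H : n (z0 ⊙ z0)) by (rewrite odot0; apply n0).
  pose proof (hh_small _ H) as E. rewrite add0 in E. lra.
Qed.
Lemma hh_z1 : hh z1 = 1.
Proof.
  assert (H : ~ n (z1 ⊙ z1)) by (rewrite odot1; apply n1).
  pose proof (hh_big _ H) as E. rewrite odot1 in E. lra.
Qed.
Lemma hh_zero z : n z -> hh z = 0.
Proof.
  intro H. rewrite <- hh_z0. apply hh_eqv. split. apply pre_n; auto. apply pre_0.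
Qed.
Lemma hh_one z : n (¬ z) -> hh z = 1.
Proof.
  intro H. rewrite <- hh_z1. apply hh_eqv. split. apply pre_1. apply pre_1'; auto.
Qed.

Lemma half_abs (a b : R) : a = b / 2 -> Rabs a <= Rabs b / 2.
Proof.
  intro E; subst. unfold Rdiv. rewrite Rabs_mult, (Rabs_right (/2)) by lra. lra.
Qed.

Lemma hh_neg x : hh (¬ x) = 1 - hh x.
Proof.
  cut (hh (¬ x) + hh x - 1 = 0). lra.
  apply (contraction (fun x => hh (¬ x) + hh x - 1) 1).
  - intro t. pose proof (hh_range t). pose proof (hh_range (¬ t)). apply Rabs_le. lra.
  - intro t.
    destruct (classic (n (t ⊙ t))) as [S1|B1]; destruct (classic (n (¬ t ⊙ ¬ t))) as [S2|B2].
    + exists t. rewrite (hh_small t S1), (hh_small (¬ t) S2).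
      rewrite (hh_one (t ⊕ t)) by (rewrite negadd; auto).
      rewrite (hh_one (¬ t ⊕ ¬ t)) by (rewrite negadd, !negK; auto).
      replace (1 / 2 + 1 / 2 - 1) with 0 by lra. rewrite Rabs_R0. lra.
    + exists (t ⊕ t). apply half_abs. rewrite (hh_small t S1), (hh_big (¬ t) B2).
      rewrite <- negadd. lra.
    + exists (t ⊙ t). apply half_abs. rewrite (hh_big t B1), (hh_small (¬ t) S2).
      rewrite <- negodot. lra.
    + exfalso. destruct (total t (¬ t)) as [h|h].
      * apply B1. apply small_pre; auto.
      * apply B2. exact h.
Qed.

Definition GG x y := hh (x ⊕ y) + hh (x ⊙ y) - hh x - hh y.

Lemma GG_neg x y : GG (¬ x) (¬ y) = - GG x y.
Proof.
  unfold GG. rewrite <- negodot, <- negadd, !hh_neg. lra.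
Qed.
Lemma GG_comm x y : GG y x = GG x y.
Proof. unfold GG. rewrite addC, odotC. lra. Qed.
Lemma GG_bound x y : Rabs (GG x y) <= 2.
Proof.
  unfold GG. pose proof (hh_range x). pose proof (hh_range y).
  pose proof (hh_range (x ⊕ y)). pose proof (hh_range (x ⊙ y)). apply Rabs_le. lra.
Qed.

Lemma caseA x y : n (x ⊙ x) -> n (y ⊙ y) -> GG (x ⊕ x) (y ⊕ y) = 2 * GG x y.
Proof.
  intros Hx Hy.
  assert (nxy : n (x ⊙ y)).
  { destruct (total x y) as [h|h].
    - apply n_pre with (y ⊙ y); auto. apply pre_odotr; auto.
    - rewrite odotC. apply n_pre with (x ⊙ x); auto. apply pre_odotr; auto. }
  pose proof (I12 x y Hx Hy) as E. apply hh_eqv in E.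
  unfold GG. rewrite (hh_zero _ nxy), (hh_small x Hx), (hh_small y Hy), <- E.
  replace (x ⊕ x ⊕ (y ⊕ y)) with ((x ⊕ y) ⊕ (x ⊕ y)) by ac_eq.
  destruct (classic (n ((x ⊕ y) ⊙ (x ⊕ y)))) as [Hs|Hs].
  - rewrite (hh_small _ Hs), (hh_zero _ Hs). lra.
  - rewrite (hh_big _ Hs). rewrite (hh_one ((x ⊕ y) ⊕ (x ⊕ y))). lra.
    rewrite negadd. apply big_pre; auto.
Qed.

Lemma caseB1 x y : ~ n (x ⊙ x) -> n (y ⊙ y) -> n (x ⊙ y) ->
  GG (x ⊙ x) (y ⊕ y) = 2 * GG x y.
Proof.
  intros Hx Hy Hxy.
  destruct (I3 x y Hx Hy Hxy) as [E N].
  apply hh_eqv in E.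
  assert (Hs : ~ n ((x ⊕ y) ⊙ (x ⊕ y))).
  { intro Hs. apply Hx. apply n_pre with ((x ⊕ y) ⊙ (x ⊕ y)); auto.
    apply pre_trans with (x ⊙ (x ⊕ y)). apply pre_odotl, pre_add_self. apply pre_odotr, pre_add_self. }
  unfold GG. rewrite (hh_zero _ Hxy), (hh_zero _ N), (hh_big x Hx), (hh_small y Hy), (hh_big _ Hs), E.
  lra.
Qed.

Lemma mixed x y : ~ n (x ⊙ x) -> n (y ⊙ y) ->
  exists x' y', Rabs (GG x y) <= Rabs (GG x' y') / 2.
Proof.
  intros Hx Hy.
  destruct (classic (n (x ⊙ y))) as [Hxy|Hxy].
  - exists (x ⊙ x), (y ⊕ y). apply half_abs. rewrite caseB1; auto. lra.
  - assert (h : mpre (¬ y) x).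
    { destruct (total x (¬ y)) as [h|h]; auto. exfalso; apply Hxy, nodot_pre; auto. }
    assert (Snx : n (¬ x ⊙ ¬ x)) by (apply big_pre; auto).
    rewrite <- (Ropp_involutive (GG x y)), <- GG_neg, Rabs_Ropp.
    destruct (classic (n (¬ y ⊙ ¬ y))) as [Sny|Bny].
    + exists (¬ x ⊕ ¬ x), (¬ y ⊕ ¬ y). apply half_abs. rewrite caseA; auto. lra.
    + exists (¬ y ⊙ ¬ y), (¬ x ⊕ ¬ x). apply half_abs. rewrite caseB1; auto.
      rewrite GG_comm. lra.
Qed.

Lemma GG_zero x y : GG x y = 0.
Proof.
  apply (contraction (fun p : A * A => GG (fst p) (snd p)) 2 (fun p => GG_bound _ _) ) with (t := (x, y)).
  intros [a b]. simpl.
  destruct (classic (n (a ⊙ a))) as [Sa|Ba]; destruct (classic (n (b ⊙ b))) as [Sb|Bb].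
  - exists (a ⊕ a, b ⊕ b). simpl. apply half_abs. rewrite caseA; auto. lra.
  - destruct (mixed b a Bb Sa) as [x' [y' H]]. exists (x', y'). simpl. rewrite <- GG_comm. auto.
  - destruct (mixed a b Ba Sb) as [x' [y' H]]. exists (x', y'). simpl. auto.
  - exists (¬ a ⊕ ¬ a, ¬ b ⊕ ¬ b). simpl.
    rewrite caseA by (apply big_pre; auto). rewrite GG_neg.
    rewrite Rabs_mult, Rabs_Ropp, (Rabs_right 2) by lra. lra.
Qed.

Lemma hh_add x y : hh (x ⊕ y) = Rmin 1 (hh x + hh y).
Proof.
  pose proof (GG_zero x y) as G. unfold GG in G.
  pose proof (hh_range (x ⊕ y)). pose proof (hh_range (x ⊙ y)).
  destruct (total x (¬ y)) as [h|h].
  - apply nodot_pre in h. rewrite (hh_zero _ h) in G.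
    unfold Rmin. destruct Rle_dec; lra.
  - assert (N : n (¬ (x ⊕ y))) by (rewrite negadd, odotC; exact h).
    rewrite (hh_one _ N) in *. unfold Rmin. destruct Rle_dec; lra.
Qed.

Lemma hh_mul k b : hh (mul k b) <= INR k * hh b.
Proof.
  induction k; simpl mul.
  - rewrite hh_z0. simpl. lra.
  - rewrite hh_add, S_INR. pose proof (Rmin_r 1 (hh b + hh (mul k b))). lra.
Qed.

Lemma hh_kernel b : hh b = 0 <-> n b.
Proof.
  split.
  - intro H. apply NNPP. intro Hb. destruct (arch _ Hb) as [k Hk].
    pose proof (hh_one _ Hk). pose proof (hh_mul k b). rewrite H in *. lra.
  - apply hh_zero.
Qed.

Theorem hom_exists : exists h : A -> R, is_unit_hom h /\ forall b, h b = 0 <-> n b.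
Proof.
  exists hh. split; [|apply hh_kernel].
  split; [|split; [|split]].
  - apply hh_range.
  - apply hh_z0.
  - apply hh_neg.
  - apply hh_add.
Qed.

End Chain.

Open Scope R_scope.

Lemma hom_of_max_spec {N : MVAlgebra} (I : N -> Prop) : is_maximal I ->
  is_unit_hom (hom_of_max I) /\ forall b, hom_of_max I b = 0 <-> I b.
Proof.
  intro HI. unfold hom_of_max. apply epsilon_spec. apply hom_exists; auto.
Qed.

Section UH.
Context {N : MVAlgebra}.
Variable h : N -> R.
Hypothesis Hh : is_unit_hom h.
Lemma u_range b : 0 <= h b <= 1. Proof. apply Hh. Qed.
Lemma u0 : h mv_zero = 0. Proof. apply Hh. Qed.
Lemma uneg b : h (mv_neg b) = 1 - h b. Proof. apply Hh. Qed.
Lemma uadd a b : h (mv_add a b) = Rmin 1 (h a + h b). Proof. apply Hh. Qed.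
Lemma u1 : h mv_one = 1. Proof. unfold mv_one. rewrite uneg, u0. lra. Qed.
Lemma uodot a b : h (mv_odot a b) = 1 - Rmin 1 ((1 - h a) + (1 - h b)).
Proof. unfold mv_odot. rewrite uneg, uadd, !uneg. reflexivity. Qed.
Lemma u_mono a b : mv_le a b -> h a <= h b.
Proof.
  intro H. rewrite (le_ex _ _ H), uadd. pose proof (u_range a). pose proof (u_range (mv_odot b (mv_neg a))).
  unfold Rmin. destruct Rle_dec; lra.
Qed.
End UH.

Fixpoint tm {N : MVAlgebra} (l : list bool) (b : N) : N :=
  match l with nil => b | cons true l => tm l (mv_odot b b) | cons false l => tm l (mv_add b b) end.

Lemma thr {N : MVAlgebra} k : forall m, (m < 2 ^ k)%nat -> exists l,
  forall h : N -> R, is_unit_hom h -> forall b, (0 < h (tm l b) <-> INR m / 2 ^ k < h b).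
Proof.
  induction k; intros m Hm.
  - simpl in Hm. assert (m = O) by lia. subst. exists nil. intros h Hh b. simpl.
    replace (0 / 1) with 0 by field. tauto.
  - assert (Hp : 0 < 2 ^ k) by (apply pow_lt; lra).
    assert (E2 : INR (2 ^ k) = 2 ^ k) by (rewrite pow_INR; simpl; f_equal; lra).
    destruct (lt_dec m (2 ^ k)) as [L|L].
    + destruct (IHk m L) as [l Hl]. exists (cons false l). intros h Hh b. simpl tm.
      rewrite (Hl h Hh), (uadd h Hh).
      assert (Hq : INR m < 2 ^ k) by (rewrite <- E2; apply lt_INR; auto).
      assert (Q1 : INR m / 2 ^ k < 1) by (apply Rmult_lt_reg_r with (2^k); auto; unfold Rdiv; rewrite Rmult_assoc, Rinv_l; lra).
      replace (INR m / 2 ^ S k) with (INR m / 2 ^ k / 2) by (simpl; field; lra).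
      unfold Rmin. destruct Rle_dec; split; intro; lra.
    + assert (L2 : (m - 2 ^ k < 2 ^ k)%nat) by (simpl in Hm; lia).
      destruct (IHk _ L2) as [l Hl]. exists (cons true l). intros h Hh b. simpl tm.
      rewrite (Hl h Hh), (uodot h Hh).
      assert (Hq1 : 2 ^ k <= INR m) by (rewrite <- E2; apply le_INR; lia).
      assert (Hq2 : INR m < 2 * 2 ^ k).
      { replace (2 * 2 ^ k) with (INR (2 ^ S k)) by (rewrite pow_INR; simpl; f_equal; lra).
        apply lt_INR; auto. }
      rewrite minus_INR by lia. rewrite E2.
      set (q := INR m / 2 ^ k).
      assert (Eq1 : (INR m - 2 ^ k) / 2 ^ k = q - 1) by (unfold q; field; lra).
      assert (Eq2 : INR m / 2 ^ S k = q / 2) by (unfold q; simpl; field; lra).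
      assert (Hq : 1 <= q < 2).
      { unfold q. split.
        - apply Rmult_le_reg_r with (2^k); auto. unfold Rdiv; rewrite Rmult_assoc, Rinv_l; lra.
        - apply Rmult_lt_reg_r with (2^k); auto. unfold Rdiv; rewrite Rmult_assoc, Rinv_l; lra. }
      rewrite Eq1, Eq2. pose proof (u_range h Hh b).
      unfold Rmin. destruct Rle_dec; split; intro; lra.
Qed.

Lemma dyadic (c r : R) : 0 <= c -> c < r -> r <= 1 ->
  exists k m, (m < 2 ^ k)%nat /\ c < INR m / 2 ^ k /\ INR m / 2 ^ k < r.
Proof.
  intros H0 H1 H2.
  assert (Hh : Rabs (/2) < 1) by (rewrite Rabs_right; lra).
  destruct (pow_lt_1_zero (/2) Hh (r - c)) as [k Hk]; [lra|].
  specialize (Hk k (le_n k)). rewrite Rabs_right in Hk by (apply Rle_ge, pow_le; lra).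
  rewrite pow_inv in Hk.
  assert (Hp : 0 < 2 ^ k) by (apply pow_lt; lra).
  destruct (archimed (c * 2 ^ k)) as [A1 A2].
  assert (Z0 : (0 <= up (c * 2 ^ k))%Z).
  { apply Z.lt_le_incl, lt_0_IZR. assert (0 <= c * 2 ^ k) by (apply Rmult_le_pos; lra). lra. }
  exists k, (Z.to_nat (up (c * 2 ^ k))).
  assert (E : INR (Z.to_nat (up (c * 2 ^ k))) = IZR (up (c * 2 ^ k))).
  { rewrite INR_IZR_INZ, Z2Nat.id; auto. }
  rewrite E.
  assert (B1 : c < IZR (up (c * 2 ^ k)) / 2 ^ k).
  { apply Rmult_lt_reg_r with (2^k); auto. unfold Rdiv; rewrite Rmult_assoc, Rinv_l; lra. }
  assert (B2 : IZR (up (c * 2 ^ k)) / 2 ^ k < r).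
  { apply Rle_lt_trans with (c + / 2 ^ k); [|lra].
    apply Rmult_le_reg_r with (2^k); auto. unfold Rdiv; rewrite Rmult_assoc, Rinv_l by lra.
    rewrite Rmult_plus_distr_r, Rinv_l by lra. lra. }
  split; [|split; auto].
  apply INR_lt. rewrite E, pow_INR. replace (INR 2) with 2 by (simpl; lra).
  apply Rmult_lt_reg_r with (/ 2 ^ k). apply Rinv_0_lt_compat; auto.
  rewrite Rinv_r by lra. unfold Rdiv in B2. lra.
Qed.

Lemma gen_open_top {X : Type} (S : (X -> Prop) -> Prop) : is_topology (gen_open S).
Proof.
  split; [|split].
  - intros T HT _. apply (proj1 HT).
  - intros U V HU HV T HT HS. apply (proj1 (proj2 HT)); [apply HU|apply HV]; auto.
  - intros F HF T HT HS. apply (proj2 (proj2 HT)). intros U FU. apply HF; auto.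
Qed.
Lemma gen_open_sub {X : Type} (S : (X -> Prop) -> Prop) B : S B -> gen_open S B.
Proof. intros HB T HT HS. auto. Qed.
Lemma gen_open_ext {X : Type} (S : (X -> Prop) -> Prop) (U V : X -> Prop) :
  (forall x, U x <-> V x) -> gen_open S U -> gen_open S V.
Proof.
  intros H HU. replace V with U; auto. apply functional_extensionality; intro x.
  apply propositional_extensionality; auto.
Qed.
Lemma open_union {X : Type} (S : (X -> Prop) -> Prop) (W : X -> Prop) :
  (forall x, W x -> exists O, gen_open S O /\ O x /\ forall y, O y -> W y) -> gen_open S W.
Proof.
  intro H. destruct (gen_open_top S) as [_ [_ Hu]].
  specialize (Hu (fun O => gen_open S O /\ forall y, O y -> W y)).
  eapply gen_open_ext; [|apply Hu; intros U [HU _]; auto].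
  intro x. split.
  - intros [U [[_ HU] Ux]]. auto.
  - intro Wx. destruct (H x Wx) as [O [HO [Ox HOW]]]. exists O. auto.
Qed.

Section Cont.
Context {N : MVAlgebra}.

Lemma star_spec (b : N) (nn : MaxN N) :
  is_unit_hom (fun c => star c nn) /\ forall c, star c nn = 0 <-> proj1_sig nn c.
Proof. unfold star. apply hom_of_max_spec. apply (proj2_sig nn). Qed.

Lemma star_range (b : N) nn : 0 <= star b nn <= 1.
Proof. apply (u_range _ (proj1 (star_spec b nn))). Qed.

Lemma open_gt (b : N) (c : R) : max_open N (fun nn => c < star b nn).
Proof.
  apply open_union. intros nn0 H0.
  destruct (Rlt_le_dec c 0) as [Hc|Hc].
  - exists (fun _ => True). split. apply gen_open_top. split; auto.
    intros y _. pose proof (star_range b y). lra.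
  - pose proof (star_range b nn0).
    destruct (dyadic c (star b nn0)) as [k [m [Hm [B1 B2]]]]; try lra.
    destruct (thr (N := N) k m Hm) as [l Hl].
    exists (fun nn => ~ proj1_sig nn (tm l b)). split; [|split].
    + apply gen_open_sub. exists (tm l b). reflexivity.
    + destruct (star_spec b nn0) as [U K]. rewrite <- K.
      pose proof (proj2 (Hl _ U b) B2). lra.
    + intros y Hy. destruct (star_spec b y) as [U K].
      assert (0 < star (tm l b) y).
      { pose proof (star_range (tm l b) y). destruct (Req_dec (star (tm l b) y) 0) as [E|E].
        - exfalso. apply Hy, K; auto.
        - lra. }
      pose proof (proj1 (Hl _ U b) H1). lra.
Qed.

Lemma open_lt (b : N) (c : R) : max_open N (fun nn => star b nn < c).
Proof.
  eapply gen_open_ext; [|apply (open_gt (mv_neg b) (1 - c))].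
  intro nn. destruct (star_spec b nn) as [U _]. rewrite (uneg _ U). lra.
Qed.

Lemma open_pre (b : N) (U : R -> Prop) : open_set U -> max_open N (fun nn => U (star b nn)).
Proof.
  intro HU. apply open_union. intros nn0 H0.
  destruct (HU _ H0) as [d Hd].
  exists (fun nn => star b nn0 - d < star b nn /\ star b nn < star b nn0 + d). split; [|split].
  - apply gen_open_top; [apply open_gt | apply open_lt].
  - pose proof (cond_pos d). lra.
  - intros y [Y1 Y2]. apply Hd. unfold disc. apply Rabs_def1; lra.
Qed.

End Cont.

Lemma cont_crit {M N : MVAlgebra} (f : MaxN N -> M -> R) :
  (forall a U, open_set U -> max_open N (fun nn => U (f nn a))) -> continuous_max_ptw f.
Proof.
  intros H V HV.
  apply (HV (fun W => max_open N (fun nn => W (f nn)))).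
  - split; [|split].
    + apply gen_open_top.
    + intros U V' HU HV'. apply (proj1 (proj2 (gen_open_top _))); auto.
    + intros F HF. apply open_union. intros x [U [FU Ux]].
      exists (fun nn => U (f nn)). split; [apply HF; auto|split; [auto|]]. intros y Uy. exists U; auto.
  - intros B [a [U [HU ->]]]. apply H; auto.
Qed.

Lemma le_wedge_eq {A : MVAlgebra} (a b : A) : mv_le a b -> mv_wedge a b = a.
Proof.
  intro H. unfold mv_wedge. rewrite veeC, le_vee_eq. apply negK. apply le_neg; auto.
Qed.

Lemma p_mono {M N : MVAlgebra} (p : M -> N) : is_prob_map p ->
  forall a b, mv_le a b -> mv_le (p a) (p b).
Proof.
  intros [P1 _] a b H. rewrite (le_ex _ _ H), P1. apply le_add.
Qed.

Theorem lemma4p2 (M N : MVAlgebra) :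
  (forall p : M -> N, is_prob_map p ->
     (forall n : MaxN N, is_state (dual p n)) /\ continuous_max_ptw (dual p)) /\
  (semisimple N ->
     forall p q : M -> N, is_prob_map p -> is_prob_map q ->
       dual p = dual q -> p = q).
Proof.
  split.
  - intros p Hp. split.
    + intro nn. destruct (star_spec (N := N) mv_zero nn) as [U K].
      unfold dual. destruct Hp as [P1 [P2 P3]].
      split; [|split].
      * intro a. apply star_range.
      * rewrite P3. apply (u1 _ U).
      * intros a b Hab.
        assert (Hb : mv_le b (mv_neg a)) by (apply odot0_le; rewrite odotC; auto).
        rewrite P1, le_wedge_eq by auto.
        pose proof (uadd _ U (p a) (p b)) as Ad. cbv beta in Ad. rewrite Ad.
        assert (mv_le (p b) (mv_neg (p a))) by (rewrite <- P2; apply p_mono; [split; auto|auto]).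
        pose proof (u_mono _ U _ _ H) as H0. pose proof (uneg _ U (p a)) as Ng. cbv beta in H0, Ng.
        rewrite Ng in H0.
        pose proof (star_range (p a) nn). pose proof (star_range (p b) nn).
        unfold Rmin. destruct Rle_dec; lra.
    + apply cont_crit. intros a U HU. apply open_pre; auto.
  - intros Hs p q Hp Hq E. apply functional_extensionality. intro a.
    set (u := p a). set (v := q a).
    assert (Huv : forall I (HI : is_maximal I), hom_of_max I u = hom_of_max I v).
    { intros I HI. pose proof (f_equal (fun f => f (exist _ I HI) a) E) as E'. simpl in E'.
      unfold dual, star in E'. simpl in E'. exact E'. }
    assert (D : mv_add (mv_odot u (mv_neg v)) (mv_odot v (mv_neg u)) = mv_zero).
    { apply Hs. intros I HI. destruct (hom_of_max_spec I HI) as [U K]. apply K.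
      rewrite (uadd _ U), !(uodot _ U), !(uneg _ U), (Huv I HI).
      pose proof (u_range _ U v). unfold Rmin. repeat destruct Rle_dec; lra. }
    assert (D1 : mv_odot u (mv_neg v) = mv_zero).
    { apply le_0_eq. rewrite <- D. apply le_add. }
    assert (D2 : mv_odot v (mv_neg u) = mv_zero).
    { apply le_0_eq. rewrite <- D. apply le_addl. }
    apply le_antisym.
    + apply odot0_le in D1. rewrite negK in D1. exact D1.
    + apply odot0_le in D2. rewrite negK in D2. exact D2.
Qed.
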